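(* Let $X,Y,Z$ be Dedekind complete Riesz spaces; all maps below are order continuous and increasing, and $f^{s}$ denotes the unique left order continuous increasing extension of $f$ to the sup-completions. (i) If $f,g:X\to Y$ satisfy $f\le g$, then $f^{s}\le g^{s}$. (ii) If $f,g,h:X\to Y$ satisfy $h=f+g$, then $h^{s}=f^{s}+g^{s}$. (iii) If $f:X\to Y$ and $g:Y\to Z$, then $(g\circ f)^{s}=g^{s}\circ f^{s}$.
   Context: For a Dedekind complete Riesz space $X$, its sup-completion $X^{s}$ is the set of classes of nonempty upward directed subsets of $X$ under $A\sim B$ iff $\sup_{a\in A}(x\wedge a)=\sup_{b\in B}(x\wedge b)$ for all $x\in X$, with induced addition, nonnegative scalar multiplication and order; $X\subseteq X^{s}$, every nonempty subset of $X^s$ has a supremum and every element is the supremum of an increasing net from $X$. A map $F$ is left order continuous if $x_\alpha\uparrow x$ implies $F(x_\alpha)\uparrow F(x)$. Every order continuous increasing map $f:X\to Y$ has a unique left order continuous increasing extension $f^s:X^s\to Y^s$. *)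

(* Defs.v *)
From HB Require Import structures.
From mathcomp Require Import all_boot all_order all_algebra.
From mathcomp Require Import reals.
Set Implicit Arguments. Unset Strict Implicit. Unset Printing Implicit Defensive.
Import Order.TTheory GRing.Theory Num.Theory.
Local Open Scope ring_scope.

Section OrderNotions.
Context {T : Type} (le : T -> T -> Prop).

Definition is_ub (A : T -> Prop) (s : T) : Prop := forall a, A a -> le a s.
Definition is_sup (A : T -> Prop) (s : T) : Prop :=
  is_ub A s /\ forall t, is_ub A t -> le s t.
Definition is_inf (A : T -> Prop) (s : T) : Prop :=
  (forall a, A a -> le s a) /\ forall t, (forall a, A a -> le t a) -> le t s.

Definition pair_set (x y : T) : T -> Prop := fun z => z = x \/ z = y.

Definition updirected (A : T -> Prop) : Prop :=
  (exists a, A a) /\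
  forall a b, A a -> A b -> exists c, A c /\ le a c /\ le b c.

End OrderNotions.

Definition directed_index (I : Type) (leI : I -> I -> Prop) : Prop :=
  (exists i : I, True) /\
  (forall i, leI i i) /\
  (forall i j k, leI i j -> leI j k -> leI i k) /\
  (forall i j, exists k, leI i k /\ leI j k).

Definition riesz_space (R : realType) (X : lmodType R) (le : X -> X -> Prop) : Prop :=
  (forall x, le x x) /\
  (forall x y z, le x y -> le y z -> le x z) /\
  (forall x y, le x y -> le y x -> x = y) /\
  (forall x y z, le x y -> le (x + z) (y + z)) /\
  (forall (a : R) x y, 0 <= a -> le x y -> le (a *: x) (a *: y)) /\
  (forall x y, exists s, is_sup le (pair_set x y) s).

Definition dedekind_complete_riesz (R : realType) (X : lmodType R)
    (le : X -> X -> Prop) : Prop :=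
  riesz_space le /\
  forall A : X -> Prop, (exists a, A a) -> (exists u, is_ub le A u) ->
    exists s, is_sup le A s.

(** ** The sup-completion X^s.
    An element of X^s is represented by a nonempty upward directed subset A of X
    (predicate [updirected le A]); two representatives are identified by [sc_eq]. *)
Section SupCompletion.
Context {T : Type} (le : T -> T -> Prop).

Definition meets (x : T) (A : T -> Prop) : T -> Prop :=
  fun z => exists a, A a /\ is_inf le (pair_set x a) z.

Definition sc_eq (A B : T -> Prop) : Prop :=
  forall x s, is_sup le (meets x A) s <-> is_sup le (meets x B) s.

Definition sc_le (A B : T -> Prop) : Prop :=
  forall x s t, is_sup le (meets x A) s -> is_sup le (meets x B) t -> le s t.

Definition sc_emb (x : T) : T -> Prop := fun z => z = x.

Definition sc_is_sup (I : Type) (fam : I -> T -> Prop) (S : T -> Prop) : Prop :=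
  (forall i, sc_le (fam i) S) /\
  forall U, updirected le U -> (forall i, sc_le (fam i) U) -> sc_le S U.

End SupCompletion.

Definition sc_add (R : realType) (X : lmodType R) (A B : X -> Prop) : X -> Prop :=
  fun z => exists a b, A a /\ B b /\ z = a + b.

Definition oc_increasing {X Y : Type} (leX : X -> X -> Prop) (leY : Y -> Y -> Prop)
    (f : X -> Y) : Prop :=
  (forall x y, leX x y -> leY (f x) (f y)) /\
  (forall (I : Type) (leI : I -> I -> Prop) (net : I -> X) (x : X),
      directed_index leI ->
      (forall i j, leI i j -> leX (net i) (net j)) ->
      is_sup leX (fun z => exists i, z = net i) x ->
      is_sup leY (fun z => exists i, z = f (net i)) (f x)) /\
  (forall (I : Type) (leI : I -> I -> Prop) (net : I -> X) (x : X),
      directed_index leI ->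
      (forall i j, leI i j -> leX (net j) (net i)) ->
      is_inf leX (fun z => exists i, z = net i) x ->
      is_inf leY (fun z => exists i, z = f (net i)) (f x)).

Definition sc_extension {X Y : Type} (leX : X -> X -> Prop) (leY : Y -> Y -> Prop)
    (f : X -> Y) (F : (X -> Prop) -> (Y -> Prop)) : Prop :=
  [/\
      (forall A, updirected leX A -> updirected leY (F A)),
      (forall A B, updirected leX A -> updirected leX B ->
         sc_eq leX A B -> sc_eq leY (F A) (F B)),
      (forall x, sc_eq leY (F (sc_emb x)) (sc_emb (f x))),
      (forall A B, updirected leX A -> updirected leX B ->
         sc_le leX A B -> sc_le leY (F A) (F B))
    &
      (forall (I : Type) (leI : I -> I -> Prop) (net : I -> X -> Prop) (S : X -> Prop),
         directed_index leI ->
         (forall i, updirected leX (net i)) -> updirected leX S ->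
         (forall i j, leI i j -> sc_le leX (net i) (net j)) ->
         sc_is_sup leX net S ->
         (forall i j, leI i j -> sc_le leY (F (net i)) (F (net j))) /\
         sc_is_sup leY (fun i => F (net i)) (F S))].

(* Main.v *)
Require Import Defs.
From mathcomp Require Import all_boot all_order all_algebra.
From mathcomp Require Import reals.
Import Order.TTheory GRing.Theory Num.Theory.
Local Open Scope ring_scope.
Set Implicit Arguments. Unset Strict Implicit.

Section Gen.
Variables (R : realType) (T : lmodType R) (le : T -> T -> Prop).
Hypothesis HT : dedekind_complete_riesz le.

Lemma le_refl x : le x x.
Proof. by case: HT => [[? _] _]. Qed.
Lemma le_trans x y z : le x y -> le y z -> le x z.
Proof. by case: HT => [[_ [? _]] _]; eauto. Qed.
Lemma le_anti x y : le x y -> le y x -> x = y.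
Proof. by case: HT => [[_ [_ [? _]]] _]; eauto. Qed.
Lemma le_addr x y z : le x y -> le (x + z) (y + z).
Proof. by case: HT => [[_ [_ [_ [? _]]]] _]; eauto. Qed.
Lemma sup2_ex x y : exists s, is_sup le (pair_set x y) s.
Proof. by case: HT => [[_ [_ [_ [_ [_ ?]]]]] _]. Qed.
Lemma ded A : (exists a, A a) -> (exists u, is_ub le A u) -> exists s, is_sup le A s.
Proof. by case: HT => _ ?; eauto. Qed.

Lemma le_add2r z x y : le x y <-> le (x + z) (y + z).
Proof.
split; first exact: le_addr.
by move=> /(le_addr (- z)); rewrite !addrK.
Qed.
Lemma le_addl z x y : le x y -> le (z + x) (z + y).
Proof. by move=> /(le_addr z); rewrite ![_ + z]addrC. Qed.
Lemma le_addD a b c d : le a b -> le c d -> le (a + c) (b + d).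
Proof.
move=> h1 h2; apply: (le_trans (y := b + c)); first exact: le_addr.
exact: le_addl.
Qed.
Lemma le_subr x y z : le x (y - z) <-> le (x + z) y.
Proof. by rewrite (le_add2r z) subrK. Qed.
Lemma le_subl x y z : le (x - z) y <-> le x (y + z).
Proof. by rewrite (le_add2r z) subrK. Qed.

Lemma ub_pair x y t : is_ub le (pair_set x y) t <-> le x t /\ le y t.
Proof.
split; first by move=> h; split; apply: h; [left|right].
by case=> h1 h2 z [->|->].
Qed.

Lemma inf_pairP x y m : is_inf le (pair_set x y) m <->
  [/\ le m x, le m y & forall w, le w x -> le w y -> le w m].
Proof.
split.
  case=> h1 h2; split; [by apply: h1; left | by apply: h1; right|].
  by move=> w wx wy; apply: h2 => z [->|->].
case=> h1 h2 h3; split; first by move=> z [->|->].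
by move=> t ht; apply: h3; apply: ht; [left|right].
Qed.

Lemma sup_uniq A s t : is_sup le A s -> is_sup le A t -> s = t.
Proof. by case=> h1 h2 [h3 h4]; apply: le_anti; [apply: h2|apply: h4]. Qed.
Lemma inf_uniq A s t : is_inf le A s -> is_inf le A t -> s = t.
Proof. by case=> h1 h2 [h3 h4]; apply: le_anti; [apply: h4|apply: h2]. Qed.

Lemma inf_from_sup x y j : is_sup le (pair_set x y) j ->
  is_inf le (pair_set x y) (x + y - j).
Proof.
case=> /ub_pair [xj yj] hl; apply/inf_pairP; split.
- by apply/le_subl; apply: le_addl.
- by apply/le_subl; rewrite [y + j]addrC; apply: le_addr.
- move=> w wx wy; apply/le_subr; rewrite addrC; apply/le_subr.
  apply: hl; apply/ub_pair; split; apply/le_subr.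
  + exact: le_addl.
  + by rewrite addrC; apply: le_addr.
Qed.

Lemma inf2_ex x y : exists m, is_inf le (pair_set x y) m.
Proof. by have [j hj] := sup2_ex x y; exists (x + y - j); apply: inf_from_sup. Qed.

Lemma inf_le1 x y m : is_inf le (pair_set x y) m -> le m x.
Proof. by case/inf_pairP. Qed.
Lemma inf_le2 x y m : is_inf le (pair_set x y) m -> le m y.
Proof. by case/inf_pairP. Qed.
Lemma inf_glb x y m w : is_inf le (pair_set x y) m -> le w x -> le w y -> le w m.
Proof. by case/inf_pairP => _ _; apply. Qed.

Lemma distr S s x m : is_sup le S s -> is_inf le (pair_set x s) m ->
  is_sup le (fun z => exists a, S a /\ is_inf le (pair_set x a) z) m.
Proof.
move=> [sub sl] hm; split.
  move=> z [a [Sa hz]]; apply: (inf_glb hm); first exact: inf_le1 hz.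
  exact: le_trans (inf_le2 hz) (sub a Sa).
move=> t ht.
have [j hj] := sup2_ex x s.
have -> := inf_uniq hm (inf_from_sup hj).
have st : le s (t + j - x).
  apply: sl => a Sa; apply/le_subr.
  have [ja hja] := sup2_ex x a.
  have hma := inf_from_sup hja.
  have mat : le (x + a - ja) t by apply: ht; exists a.
  have jaj : le ja j.
    case: hja => _; apply; apply/ub_pair; case: hj => /ub_pair [xj sj] _.
    by split=> //; apply: le_trans (sub a Sa) sj.
  by have := le_addD mat jaj; rewrite subrK addrC.
by apply/le_subl; move/le_subr: st; rewrite addrC.
Qed.

Lemma meets_sup_ex x A : (exists a, A a) -> exists s, is_sup le (meets le x A) s.
Proof.
move=> [a Aa]; apply: ded.
  by have [m hm] := inf2_ex x a; exists m, a.
by exists x => z [b [_ hz]]; apply: inf_le1 hz.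
Qed.

Lemma sup_meets_emb x a z : is_inf le (pair_set x a) z ->
  is_sup le (meets le x (sc_emb a)) z.
Proof.
move=> hz; split.
  by move=> w [b [-> hw]]; rewrite (inf_uniq hw hz); apply: le_refl.
by move=> t; apply; exists a.
Qed.

Lemma sc_le_elems D U : (forall d, D d -> sc_le le (sc_emb d) U) -> sc_le le D U.
Proof.
move=> h x s t [_ sl] ht; apply: sl => z [a [Da hz]].
exact: h a Da x z t (sup_meets_emb hz) ht.
Qed.

Lemma elem_le D d : D d -> sc_le le (sc_emb d) D.
Proof.
move=> Dd x s t hs [tu _].
have [m hm] := inf2_ex x d.
rewrite (sup_uniq hs (sup_meets_emb hm)); apply: tu; by exists d.
Qed.

Lemma sc_le_trans A B C : (exists b, B b) -> sc_le le A B -> sc_le le B C ->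
  sc_le le A C.
Proof.
move=> hB h1 h2 x s u hs hu; have [t ht] := meets_sup_ex x hB.
exact: le_trans (h1 x s t hs ht) (h2 x t u ht hu).
Qed.

Lemma sc_eq_le A B : sc_eq le A B -> sc_le le A B.
Proof. by move=> h x s t /h hs ht; rewrite (sup_uniq hs ht); apply: le_refl. Qed.
Lemma sc_eq_sym A B : sc_eq le A B -> sc_eq le B A.
Proof. by move=> h x s; split => /h. Qed.

Lemma sc_le_eq A B : (exists a, A a) -> (exists b, B b) ->
  sc_le le A B -> sc_le le B A -> sc_eq le A B.
Proof.
move=> hA hB h1 h2 x s; split=> hs.
  have [t ht] := meets_sup_ex x hB.
  by rewrite (le_anti (h1 x s t hs ht) (h2 x t s ht hs)).
have [t ht] := meets_sup_ex x hA.
by rewrite (le_anti (h2 x s t hs ht) (h1 x t s ht hs)).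
Qed.

Definition below d U := is_sup le (meets le d U) d.

Lemma emb_le_below d U : (exists u, U u) -> sc_le le (sc_emb d) U -> below d U.
Proof.
move=> hU h; have [t ht] := meets_sup_ex d hU.
have hdd : is_inf le (pair_set d d) d.
  by apply/inf_pairP; split; [apply: le_refl|apply: le_refl|].
have dt := h d d t (sup_meets_emb hdd) ht.
suff td : le t d by rewrite -(le_anti dt td) in ht.
by case: ht => _; apply => z [u [_ hz]]; apply: inf_le1 hz.
Qed.

Lemma below_emb_le d U : below d U -> sc_le le (sc_emb d) U.
Proof.
move=> hb x s t hs [tu _].
have [m hm] := inf2_ex x d.
rewrite (sup_uniq hs (sup_meets_emb hm)).
case: (distr hb hm) => _; apply => z [w [[u [Uu hw]] hz]].
have [mu hmu] := inf2_ex x u.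
apply: le_trans (tu mu _); last by exists u.
apply: (inf_glb hmu); first exact: inf_le1 hz.
exact: le_trans (inf_le2 hz) (inf_le2 hw).
Qed.

Lemma emb_mono y1 y2 : le y1 y2 -> sc_le le (sc_emb y1) (sc_emb y2).
Proof.
move=> h; apply: below_emb_le; split.
  by move=> z [b [-> hz]]; apply: inf_le1 hz.
move=> t; apply; exists y2; split=> //.
by apply/inf_pairP; split=> //; apply: le_refl.
Qed.

Lemma below_add d1 d2 U1 U2 : below d1 U1 -> below d2 U2 ->
  below (d1 + d2) (sc_add U1 U2).
Proof.
move=> [ub1 l1] [ub2 l2]; split.
  by move=> z [u [_ hz]]; apply: inf_le1 hz.
move=> t ht; apply/le_subr/l1 => z1 [u1 [U1u1 hz1]].
apply/le_subr; rewrite addrC; apply/le_subr/l2 => z2 [u2 [U2u2 hz2]].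
apply/le_subr; rewrite addrC.
have [m hm] := inf2_ex (d1 + d2) (u1 + u2).
apply: le_trans (ht m _); last by exists (u1 + u2); split=> //; exists u1, u2.
apply: (inf_glb hm); apply: le_addD.
- exact: inf_le1 hz1.
- exact: inf_le1 hz2.
- exact: inf_le2 hz1.
- exact: inf_le2 hz2.
Qed.

End Gen.

Definition img {X Y : Type} (f : X -> Y) (A : X -> Prop) : Y -> Prop :=
  fun y => exists a, A a /\ y = f a.

Section Ext.
Variables (R : realType) (X Y : lmodType R) (leX : X -> X -> Prop) (leY : Y -> Y -> Prop).
Hypotheses (HX : dedekind_complete_riesz leX) (HY : dedekind_complete_riesz leY).
Variables (f : X -> Y) (F : (X -> Prop) -> (Y -> Prop)).
Hypotheses (fmono : forall x y, leX x y -> leY (f x) (f y))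
  (Fext : sc_extension leX leY f F).

Lemma img_upd A : updirected leX A -> updirected leY (img f A).
Proof.
case=> [[a0 Aa0] hd]; split; first by exists (f a0), a0.
move=> _ _ [a [Aa ->]] [b [Ab ->]].
have [c [Ac [ac bc]]] := hd a b Aa Ab.
by exists (f c); split; [exists c | split; apply: fmono].
Qed.

Lemma emb_upd (T : lmodType R) (le : T -> T -> Prop) (HT : dedekind_complete_riesz le) x :
  updirected le (sc_emb x).
Proof.
split; first by exists x.
by move=> a b -> ->; exists x; split=> //; split; apply: le_refl HT _.
Qed.

Lemma Fsup A : updirected leX A ->
  sc_is_sup leY (fun i : {a | A a} => F (sc_emb (sval i))) (F A).
Proof.
move=> hA; case: Fext => _ _ _ _ loc.
have := @loc {a | A a} (fun i j => leX (sval i) (sval j))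
  (fun i => sc_emb (sval i)) A.
case.
- case: hA => [[a Aa] hd]; split; first by exists (exist _ a Aa).
  split; first by move=> i; apply: le_refl HX _.
  split; first by move=> i j k h1 h2; exact: (le_trans HX h1 h2).
  move=> [a1 Aa1] [b Ab]; have [c [Ac [ac bc]]] := hd a1 b Aa1 Ab.
  by exists (exist _ c Ac).
- by move=> i; apply: emb_upd HX _.
- exact: hA.
- by move=> i j h; exact: (emb_mono HX h).
- split; first by move=> [a Aa]; exact: (elem_le HX Aa).
  by move=> U _ hU; apply: (sc_le_elems HX) => a Aa; apply: (hU (exist _ a Aa)).
- by [].
Qed.

Lemma upd_ne (T : Type) (le : T -> T -> Prop) A : updirected le A -> exists a, A a.
Proof. by case. Qed.

Lemma F_img A : updirected leX A -> sc_eq leY (F A) (img f A).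
Proof.
move=> hA; have [s1 s2] := Fsup hA.
have hI := img_upd hA.
case: (Fext) => Fu _ Fe _ _.
apply: (sc_le_eq HY (upd_ne (Fu _ hA)) (upd_ne hI)).
  apply: (s2 _ hI) => -[a Aa] /=.
  apply: (sc_le_trans HY _ (sc_eq_le HY (Fe a))); first by exists (f a).
  by apply: (elem_le HY); exists a.
apply: (sc_le_elems HY) => _ [a [Aa ->]].
apply: (sc_le_trans HY (upd_ne (Fu _ (emb_upd HX a)))) (s1 (exist _ a Aa)).
exact: (sc_eq_le HY (sc_eq_sym (Fe a))).
Qed.

End Ext.

Lemma add_ne (R : realType) (T : lmodType R) (A B : T -> Prop) :
  (exists a, A a) -> (exists b, B b) -> exists c, sc_add A B c.
Proof. by move=> [a Aa] [b Bb]; exists (a + b), a, b. Qed.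

Lemma img_ne (X Y : Type) (f : X -> Y) (A : X -> Prop) :
  (exists a, A a) -> exists y, img f A y.
Proof. by move=> [a Aa]; exists (f a), a. Qed.

Theorem propositionP3 (R : realType) (X Y Z : lmodType R)
    (leX : X -> X -> Prop) (leY : Y -> Y -> Prop) (leZ : Z -> Z -> Prop) :
  dedekind_complete_riesz leX -> dedekind_complete_riesz leY ->
  dedekind_complete_riesz leZ ->
  (* (i) monotonicity of f |-> f^s *)
  (forall (f g : X -> Y) (F G : (X -> Prop) -> (Y -> Prop)),
     oc_increasing leX leY f -> oc_increasing leX leY g ->
     sc_extension leX leY f F -> sc_extension leX leY g G ->
     (forall x, leY (f x) (g x)) ->
     forall A, updirected leX A -> sc_le leY (F A) (G A)) /\
  (* (ii) additivity: (f + g)^s = f^s + g^s *)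
  (forall (f g h : X -> Y) (F G H : (X -> Prop) -> (Y -> Prop)),
     oc_increasing leX leY f -> oc_increasing leX leY g -> oc_increasing leX leY h ->
     sc_extension leX leY f F -> sc_extension leX leY g G ->
     sc_extension leX leY h H ->
     (forall x, h x = f x + g x) ->
     forall A, updirected leX A -> sc_eq leY (H A) (sc_add (F A) (G A))) /\
  (* (iii) functoriality: (g o f)^s = g^s o f^s *)
  (forall (f : X -> Y) (g : Y -> Z) (F : (X -> Prop) -> (Y -> Prop))
          (G : (Y -> Prop) -> (Z -> Prop)) (H : (X -> Prop) -> (Z -> Prop)),
     oc_increasing leX leY f -> oc_increasing leY leZ g ->
     sc_extension leX leY f F -> sc_extension leY leZ g G ->
     sc_extension leX leZ (fun x => g (f x)) H ->
     forall A, updirected leX A -> sc_eq leZ (H A) (G (F A))).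
Proof.
move=> HX HY HZ; split; [|split].
- move=> f g F G [fm _] [gm _] Fx Gx fg A hA.
  have eF := F_img HX HY fm Fx hA; have eG := F_img HX HY gm Gx hA.
  have nA := upd_ne hA.
  apply: (sc_le_trans HY (img_ne f nA) (sc_eq_le HY eF)).
  apply: (sc_le_trans HY (img_ne g nA) _ (sc_eq_le HY (sc_eq_sym eG))).
  apply: (sc_le_elems HY) => _ [a [Aa ->]].
  apply: (sc_le_trans HY (ex_intro _ (g a) erefl) (emb_mono HY (fg a))).
  by apply: (elem_le HY); exists a.
- move=> f g h F G H [fm _] [gm _] [hm _] Fx Gx Hx hfg A hA.
  have eF := F_img HX HY fm Fx hA; have eG := F_img HX HY gm Gx hA.
  have eH := F_img HX HY hm Hx hA.
  have nA := upd_ne hA.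
  case: (Fx) => Fu _ _ _ _; case: (Gx) => Gu _ _ _ _; case: (Hx) => Hu _ _ _ _.
  have nF := upd_ne (Fu _ hA); have nG := upd_ne (Gu _ hA); have nH := upd_ne (Hu _ hA).
  apply: (sc_le_eq HY nH (add_ne nF nG)).
    apply: (sc_le_trans HY (img_ne h nA) (sc_eq_le HY eH)).
    apply: (sc_le_elems HY) => _ [a [Aa ->]]; rewrite hfg.
    apply: (below_emb_le HY); apply: (below_add HY).
      apply: (emb_le_below HY nF).
      apply: (sc_le_trans HY (img_ne f nA) _ (sc_eq_le HY (sc_eq_sym eF))).
      by apply: (elem_le HY); exists a.
    apply: (emb_le_below HY nG).
    apply: (sc_le_trans HY (img_ne g nA) _ (sc_eq_le HY (sc_eq_sym eG))).
    by apply: (elem_le HY); exists a.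
  apply: (sc_le_elems HY) => _ [y1 [y2 [h1 [h2 ->]]]].
  apply: (sc_le_trans HY (add_ne (img_ne f nA) (img_ne g nA))).
    apply: (below_emb_le HY); apply: (below_add HY).
      apply: (emb_le_below HY (img_ne f nA)).
      apply: (sc_le_trans HY nF (elem_le HY h1) (sc_eq_le HY eF)).
    apply: (emb_le_below HY (img_ne g nA)).
    apply: (sc_le_trans HY nG (elem_le HY h2) (sc_eq_le HY eG)).
  apply: (sc_le_trans HY (img_ne h nA) _ (sc_eq_le HY (sc_eq_sym eH))).
  apply: (sc_le_elems HY) => _ [u [v [[a [Aa ->]] [[b [Ab ->]] ->]]]].
  case: hA => _ hd; have [c [Ac [ac bc]]] := hd a b Aa Ab.
  have le1 : leY (f a + g b) (h c) by rewrite hfg; apply: (le_addD HY); [apply: fm|apply: gm].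
  apply: (sc_le_trans HY (ex_intro _ (h c) erefl) (emb_mono HY le1)).
  by apply: (elem_le HY); exists c.
- move=> f g F G H [fm _] [gm _] Fx Gx Hx A hA.
  have gfm : forall x y, leX x y -> leZ (g (f x)) (g (f y)) by move=> x y /fm /gm.
  have eH := F_img HX HZ gfm Hx hA.
  have eF := F_img HX HY fm Fx hA.
  have hDf := img_upd fm hA.
  have eG2 := F_img HY HZ gm Gx hDf.
  case: (Fx) => Fu _ _ _ _; case: (Gx) => Gu Gw _ _ _; case: (Hx) => Hu _ _ _ _.
  have eG1 := Gw _ _ (Fu _ hA) hDf eF.
  have nA := upd_ne hA.
  have nDgf := img_ne (fun x => g (f x)) nA.
  have nI := img_ne g (upd_ne hDf).
  have nGD := upd_ne (Gu _ hDf).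
  have l1 : sc_le leZ (img (fun x => g (f x)) A) (img g (img f A)).
    apply: (sc_le_elems HZ) => _ [a [Aa ->]]; apply: (elem_le HZ).
    by exists (f a); split=> //; exists a.
  have l2 : sc_le leZ (img g (img f A)) (img (fun x => g (f x)) A).
    apply: (sc_le_elems HZ) => _ [y [[a [Aa ->]] ->]]; apply: (elem_le HZ).
    by exists a.
  apply: (sc_le_eq HZ (upd_ne (Hu _ hA)) (upd_ne (Gu _ (Fu _ hA)))).
    apply: (sc_le_trans HZ nDgf (sc_eq_le HZ eH)).
    apply: (sc_le_trans HZ nI l1).
    apply: (sc_le_trans HZ nGD (sc_eq_le HZ (sc_eq_sym eG2))).
    exact: (sc_eq_le HZ (sc_eq_sym eG1)).
  apply: (sc_le_trans HZ nGD (sc_eq_le HZ eG1)).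
  apply: (sc_le_trans HZ nI (sc_eq_le HZ eG2)).
  apply: (sc_le_trans HZ nDgf l2).
  exact: (sc_eq_le HZ (sc_eq_sym eH)).
Qed.
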